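(* Let $0<\beta\leq 1$ and $\delta>0$. There exists a constant $M=M(\beta,\delta)$ such that the following holds for every $0<\alpha<1$, every $d$, and every finite $L$-spherical code $P\subset\mathbb{R}^d$ with $L=[-1,-\beta]\cup\{\alpha\}$. Let $G$ be the graph on vertex set $P$ in which distinct $x,y\in P$ are adjacent iff $\langle x,y\rangle\in[-1,-\beta]$. Let $U\subseteq P$ be arbitrary and let $I$ be a maximum-size independent (in $G$) subset of $U$. Then there is a subset $U'\subseteq U\setminus I$ with $|U'|\geq|U|-M|I|$ such that every vertex of $U'$ is adjacent in $G$ to at least $(1-\delta)|I|$ vertices of $I$.
   Context: For a set $L\subseteq[-1,1]$, an $L$-spherical code in $\mathbb{R}^d$ is a set $P$ of unit vectors such that $\langle x,y\rangle\in L$ for all distinct $x,y\in P$. *)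

(* Defs.v *)
From HB Require Import structures.
From mathcomp Require Import all_boot all_order all_algebra.
From mathcomp Require Import finmap.
From mathcomp Require Import reals.
Set Implicit Arguments. Unset Strict Implicit. Unset Printing Implicit Defensive.
Import Order.TTheory GRing.Theory Num.Theory.
Local Open Scope ring_scope.
Local Open Scope fset_scope.

Definition dotv (R : realType) (d : nat) (x y : 'rV[R]_d) : R := (x *m y^T) 0 0.

Definition spherical_code_L (R : realType) (d : nat) (beta alpha : R)
  (P : {fset 'rV[R]_d}) : Prop :=
  (forall x, x \in P -> dotv x x = 1) /\
  (forall x y, x \in P -> y \in P -> x != y ->
     (-1 <= dotv x y /\ dotv x y <= - beta) \/ dotv x y = alpha).

Definition adjG (R : realType) (d : nat) (beta : R) (x y : 'rV[R]_d) : bool :=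
  (x != y) && (-1 <= dotv x y) && (dotv x y <= - beta).

Definition independentG (R : realType) (d : nat) (beta : R)
  (S : {fset 'rV[R]_d}) : Prop :=
  forall x y, x \in S -> y \in S -> ~~ adjG beta x y.

Definition max_independent_in (R : realType) (d : nat) (beta : R)
  (U I : {fset 'rV[R]_d}) : Prop :=
  I `<=` U /\ independentG beta I /\
  (forall J : {fset 'rV[R]_d}, J `<=` U -> independentG beta J -> (#|` J| <= #|` I|)%N).

(* Main.v *)
Require Import Defs.
From HB Require Import structures.
From mathcomp Require Import all_boot all_order all_algebra.
From mathcomp Require Import finmap.
From mathcomp Require Import reals.
From mathcomp Require Import ring lra zify.
Import Order.TTheory GRing.Theory Num.Theory.
Set Implicit Arguments. Unset Strict Implicit. Unset Printing Implicit Defensive.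
Local Open Scope fset_scope.
Local Open Scope ring_scope.

Lemma dotvE (R : realType) d (x y : 'rV[R]_d) : dotv x y = \sum_j x 0 j * y 0 j.
Proof. by rewrite /dotv !mxE; apply: eq_bigr => j _; rewrite mxE. Qed.

Lemma dotvC (R : realType) d (x y : 'rV[R]_d) : dotv x y = dotv y x.
Proof. by rewrite !dotvE; apply: eq_bigr => j _; rewrite mulrC. Qed.

Lemma dotvDl (R : realType) d (x y z : 'rV[R]_d) : dotv (x + y) z = dotv x z + dotv y z.
Proof. by rewrite !dotvE -big_split; apply: eq_bigr => j _; rewrite !mxE mulrDl. Qed.

Lemma dotvZl (R : realType) d a (x z : 'rV[R]_d) : dotv (a *: x) z = a * dotv x z.
Proof. by rewrite !dotvE mulr_sumr; apply: eq_bigr => j _; rewrite !mxE mulrA. Qed.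

Lemma dotvDr (R : realType) d (x y z : 'rV[R]_d) : dotv z (x + y) = dotv z x + dotv z y.
Proof. by rewrite dotvC dotvDl; congr (_ + _); apply: dotvC. Qed.

Lemma dotvZr (R : realType) d a (x z : 'rV[R]_d) : dotv z (a *: x) = a * dotv z x.
Proof. by rewrite dotvC dotvZl; congr (_ * _); apply: dotvC. Qed.

Lemma dotv_ge0 (R : realType) d (x : 'rV[R]_d) : 0 <= dotv x x.
Proof. by rewrite dotvE; apply: sumr_ge0 => j _; rewrite -expr2 sqr_ge0. Qed.

Lemma dotv_suml (R : realType) d (A : seq 'rV[R]_d) z :
  dotv (\sum_(x <- A) x) z = \sum_(x <- A) dotv x z.
Proof.
elim: A => [|a A IH]; first by rewrite !big_nil dotvE big1 // => j _; rewrite mxE mul0r.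
by rewrite !big_cons dotvDl IH.
Qed.

Lemma dotv_sums (R : realType) d (A B : seq 'rV[R]_d) :
  dotv (\sum_(x <- A) x) (\sum_(y <- B) y) = \sum_(x <- A) \sum_(y <- B) dotv x y.
Proof.
rewrite dotv_suml; apply: eq_bigr => x _.
by rewrite dotvC dotv_suml; apply: eq_bigr => y _; rewrite dotvC.
Qed.

Lemma sum_cst (R : realType) (T : Type) (A : seq T) (c : R) :
  \sum_(x <- A) c = c * (size A)%:R.
Proof. elim: A => [|a A IH]; first by rewrite big_nil mulr0.
by rewrite big_cons IH /= -addn1 natrD mulrDr mulr1 addrC. Qed.

Lemma cross_le (R : realType) d (A B : seq 'rV[R]_d) c :
  (forall x y, x \in A -> y \in B -> dotv x y <= c) ->
  dotv (\sum_(x <- A) x) (\sum_(y <- B) y) <= c * (size A)%:R * (size B)%:R.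
Proof.
move=> H; rewrite dotv_sums.
apply: le_trans (_ : \sum_(x <- A) \sum_(y <- B) c <= _).
  rewrite big_seq_cond [X in _ <= X]big_seq_cond; apply: ler_sum => x /andP[xA _].
  rewrite big_seq_cond [X in _ <= X]big_seq_cond; apply: ler_sum => y /andP[yB _].
  exact: H.
under eq_bigr do rewrite sum_cst.
by rewrite sum_cst mulrAC.
Qed.

Lemma cross_eq (R : realType) d (A B : seq 'rV[R]_d) c :
  (forall x y, x \in A -> y \in B -> dotv x y = c) ->
  dotv (\sum_(x <- A) x) (\sum_(y <- B) y) = c * (size A)%:R * (size B)%:R.
Proof.
move=> H; rewrite dotv_sums.
transitivity (\sum_(x <- A) \sum_(y <- B) c).
  rewrite big_seq_cond [RHS]big_seq_cond; apply: eq_bigr => x /andP[xA _].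
  rewrite big_seq_cond [RHS]big_seq_cond; apply: eq_bigr => y /andP[yB _].
  exact: H.
under eq_bigr do rewrite sum_cst.
by rewrite sum_cst mulrAC.
Qed.

Lemma self_le (R : realType) d (A : seq 'rV[R]_d) c :
  uniq A ->
  (forall x, x \in A -> dotv x x = 1) ->
  (forall x y, x \in A -> y \in A -> x != y -> dotv x y <= c) ->
  dotv (\sum_(x <- A) x) (\sum_(y <- A) y) <=
     (size A)%:R + c * (size A)%:R * ((size A)%:R - 1).
Proof.
move=> uA H1 H; rewrite dotv_sums.
apply: le_trans (_ : \sum_(x <- A) (1 + c * ((size A)%:R - 1)) <= _); last first.
  by rewrite sum_cst mulrDl mul1r mulrAC.
rewrite big_seq_cond [X in _ <= X]big_seq_cond; apply: ler_sum => x /andP[xA _].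
rewrite (bigD1_seq x) //= H1 //; apply: lerD => //.
rewrite -big_filter.
have -> : (size A)%:R - 1 = (size [seq y <- A | y != x])%:R :> R.
  have -> : [seq y <- A | y != x] = rem x A by rewrite rem_filter.
  rewrite size_rem //; have : (0 < size A)%N by case: (A) xA.
  by case: (size A) => [|n] //= _; rewrite -addn1 natrD addrK.
rewrite -sum_cst big_seq_cond [X in _ <= X]big_seq_cond; apply: ler_sum => y /andP[].
rewrite mem_filter => /andP[yx yA] _; apply: H => //; by rewrite eq_sym.
Qed.

Lemma tri_ineq (R : realType) d (x0 : 'rV[R]_d) (A B : seq 'rV[R]_d) (alpha beta a g : R) :
  0 <= a -> g <= 0 ->
  dotv (\sum_(x <- A) x) (\sum_(y <- A) y) <=
     (size A)%:R + alpha * (size A)%:R * ((size A)%:R - 1) ->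
  dotv (\sum_(x <- A) x) x0 <= - beta * (size A)%:R ->
  dotv (\sum_(x <- A) x) (\sum_(y <- B) y) = alpha * (size A)%:R * (size B)%:R ->
  dotv x0 x0 = 1 ->
  dotv x0 (\sum_(y <- B) y) = alpha * (size B)%:R ->
  dotv (\sum_(x <- B) x) (\sum_(y <- B) y) <=
     (size B)%:R + alpha * (size B)%:R * ((size B)%:R - 1) ->
  0 <= (1 - alpha) * (a ^+ 2 * (size A)%:R + 1 + g ^+ 2 * (size B)%:R)
       + alpha * (a * (size A)%:R + 1 + g * (size B)%:R) ^+ 2
       - 2 * a * (size A)%:R * (alpha + beta).
Proof.
move=> a0 g0 hAA hAx hAB hxx hxB hBB.
set sA := \sum_(x <- A) x; set sB := \sum_(x <- B) x.
set s := (size A)%:R; set m := (size B)%:R.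
have Z := dotv_ge0 (a *: sA + x0 + g *: sB).
rewrite /sA /sB in hAA hAx hAB hxB hBB.
rewrite !(dotvDl, dotvDr, dotvZl, dotvZr) in Z.
rewrite (dotvC x0 sA) (dotvC sB sA) (dotvC sB x0) hxx hAB hxB in Z.
have h1 : a * (a * dotv sA sA) <= a * (a * (s + alpha * s * (s - 1))).
  by rewrite mulrA mulrA ler_wpM2l ?mulr_ge0.
have h2 : a * dotv sA x0 <= a * (- beta * s) by rewrite ler_wpM2l.
have h3 : g * (g * dotv sB sB) <= g * (g * (m + alpha * m * (m - 1))).
  by rewrite mulrA mulrA ler_wpM2l // -expr2 sqr_ge0.
lra.
Qed.
Lemma card_bigU (K : choiceType) (I : Type) (r : seq I) (F : I -> {fset K}) :
  (#|` \big[fsetU/fset0]_(i <- r) F i| <= \sum_(i <- r) #|` F i|)%N.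
Proof.
elim: r => [|a r IH]; first by rewrite !big_nil cardfs0.
rewrite !big_cons; apply: leq_trans (leq_card_fsetU _ _).1 _.
by rewrite leq_add2l.
Qed.

Lemma ramsey (K : choiceType) (r : K -> K -> bool) :
  (forall x y, r x y = r y x) -> (forall x, r x x = false) ->
  forall n p q (X : {fset K}), (p + q <= n)%N -> (2 ^ (p + q) <= #|` X|)%N ->
  (exists Y, Y `<=` X /\ (p <= #|` Y|)%N /\
     (forall x y, x \in Y -> y \in Y -> x != y -> r x y)) \/
  (exists Y, Y `<=` X /\ (q <= #|` Y|)%N /\
     (forall x y, x \in Y -> y \in Y -> ~~ r x y)).
Proof.
move=> rs ri; elim=> [|n IH] p q X.
  rewrite leqn0 addn_eq0 => /andP[/eqP -> _] _; left; exists fset0.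
  by split; [exact: fsub0set | split => // x y; rewrite in_fset0].
case: p => [|p] hpq hX.
  by left; exists fset0; split; [exact: fsub0set | split => // x y; rewrite in_fset0].
case: q hpq hX => [|q] hpq hX.
  by right; exists fset0; split; [exact: fsub0set | split => // x y; rewrite in_fset0].
have /fset0Pn [x xX] : X != fset0.
  by rewrite -cardfs_gt0; apply: leq_trans hX; rewrite expn_gt0.
set N := [fset y in X | r x y]; set Nn := [fset y in X | (y != x) && ~~ r x y].
have NX : N `<=` X by apply/fsubsetP => y; rewrite inE => /andP[].
have NnX : Nn `<=` X by apply/fsubsetP => y; rewrite inE => /andP[].
have hcard : (#|` N| + #|` Nn|).+1 = #|` X|.
  have -> : X = x |` (N `|` Nn).
    apply/fsetP => y; rewrite !inE; case: (boolP (y == x)) => [/eqP -> |yx] /=.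
      by rewrite xX.
    by case: (y \in X) => //=; case: (r x y).
  rewrite cardfsU1 !inE eqxx /= andbF ri /= orbF.
  rewrite andbF /= add1n; congr (_.+1).
  rewrite cardfsU; have -> : N `&` Nn = fset0.
    by apply/fsetP => y; rewrite !inE; case: (r x y); rewrite ?andbF.
  by rewrite cardfs0 subn0.
have [bigN | smallN] := leqP (2 ^ (p + q.+1)) #|` N|.
  have [[Y [YN [pY cY]]] | [Y [YN [qY iY]]]] := IH p q.+1 N ltac:(lia) bigN.
    left; exists (x |` Y); split.
      apply/fsubsetP => y; rewrite !inE => /orP[/eqP -> //|yY].
      exact: (fsubsetP NX) (fsubsetP YN y yY).
    have xY : x \notin Y by apply/negP => /(fsubsetP YN); rewrite inE; case/andP => _; rewrite ri.
    split; first by rewrite cardfsU1 xY.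
    move=> y z; rewrite !inE => /orP[/eqP -> | yY] /orP[/eqP -> | zY].
    - by rewrite eqxx.
    - by move=> _; have := fsubsetP YN z zY; rewrite inE => /andP[].
    - by move=> _; rewrite rs; have := fsubsetP YN y yY; rewrite inE => /andP[].
    - exact: cY.
  right; exists Y; split => //; exact: fsubset_trans YN NX.
have bigNn : (2 ^ (p.+1 + q) <= #|` Nn|)%N.
  move: smallN hX; rewrite -hcard addSn addnS !expnS; lia.
have [[Y [YN [pY cY]]] | [Y [YN [qY iY]]]] := IH p.+1 q Nn ltac:(lia) bigNn.
  left; exists Y; split => //; exact: fsubset_trans YN NnX.
right; exists (x |` Y); split.
  apply/fsubsetP => y; rewrite !inE => /orP[/eqP -> //|yY].
  exact: (fsubsetP NnX) (fsubsetP YN y yY).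
have xY : x \notin Y by apply/negP => /(fsubsetP YN); rewrite inE => /andP[_ /andP[]]; rewrite eqxx.

split; first by rewrite cardfsU1 xY.
move=> y z; rewrite !inE => /orP[/eqP -> | yY] /orP[/eqP -> | zY].
- by rewrite ri.
- by have := fsubsetP YN z zY; rewrite inE => /andP[_ /andP[]].
- by rewrite rs; have := fsubsetP YN y yY; rewrite inE => /andP[_ /andP[]].
- exact: iY.
Qed.
Lemma realC (R : realType) (alpha beta e t m : R) :
  0 < alpha -> alpha < 1 -> 0 < beta -> beta <= 1 -> 0 < e -> e <= 1 ->
  0 <= t -> 1 <= m -> e * t < m ->
  let a := e * beta / 4 in let g := - (1 + a * t) / m in
  0 <= (1 - alpha) * (a ^+ 2 * t + 1 + g ^+ 2 * m)
       + alpha * (a * t + 1 + g * m) ^+ 2 - 2 * a * t * (alpha + beta) ->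
  e * beta ^+ 2 * t <= 10.
Proof.
move=> a0 a1 b0 b1 e0 e1 t0 m1 etm a g H.
have m0 : 0 < m by lra.
have mn : m != 0 by rewrite gt_eqF.
have gm : g * m = - (1 + a * t) by rewrite /g; field.
have g2m : g ^+ 2 * m = (1 + a * t) ^+ 2 / m by rewrite /g; field.
rewrite gm g2m in H.
have z0 : a * t + 1 + - (1 + a * t) = 0 by lra.
rewrite z0 expr0n /= mulr0 addr0 in H.
have a0' : 0 <= a by rewrite /a divr_ge0 // mulr_ge0 // ltW.
set Q := (1 + a * t) ^+ 2 / m in H.
have Q0 : 0 <= Q by rewrite /Q divr_ge0 ?sqr_ge0 ?ltW.
have at0 : 0 <= a * t by rewrite mulr_ge0.
have a2t : 0 <= a ^+ 2 * t by rewrite mulr_ge0 ?sqr_ge0.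
have H1 : 2 * a * t * beta <= a ^+ 2 * t + 1 + Q.
  have h1 : 0 <= alpha * (a ^+ 2 * t + 1 + Q) by apply: mulr_ge0; [exact: ltW | rewrite !addr_ge0].
  have h2 : 0 <= alpha * (a * t) by apply: mulr_ge0 => //; exact: ltW.
  have -> : 2 * a * t * beta = 2 * (a * t) * (alpha + beta) - 2 * (alpha * (a * t)) by ring.
  lra.
have Qm : Q * m = (1 + a * t) ^+ 2 by rewrite /Q; field.
have eb0 : 0 <= e * beta ^+ 2 * t.
  by apply: mulr_ge0 => //; apply: mulr_ge0; [exact: ltW | exact: sqr_ge0].
have H2 : Q <= 2 + e * beta ^+ 2 * t / 8.
  rewrite -(ler_pM2r m0) Qm.
  have h1 : (1 + a * t) ^+ 2 <= 2 + 2 * (a * t) ^+ 2.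
    have := sqr_ge0 (1 - a * t); rewrite !expr2; lra.
  have h2 : 2 * (a * t) ^+ 2 = e * beta ^+ 2 * t * (e * t) / 8.
    by rewrite /a; field.
  have h3 : e * beta ^+ 2 * t * (e * t) <= e * beta ^+ 2 * t * m.
    by rewrite ler_wpM2l // ltW.
  nra.
have H3 : a ^+ 2 * t = e * beta ^+ 2 * t * e / 16 by rewrite /a; field.
have H4 : 2 * a * t * beta = e * beta ^+ 2 * t / 2 by rewrite /a; field.
have : e * beta ^+ 2 * t * e <= e * beta ^+ 2 * t by rewrite ler_piMr.
nra.
Qed.

Lemma realW (R : realType) (alpha beta s m : R) :
  0 < alpha -> alpha < 1 -> 0 < beta -> beta <= 1 -> 0 <= s -> 0 < m ->
  3 <= beta ^+ 2 * s -> (s + 1) ^+ 2 <= m ->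
  let g := - (beta * s + 1) / m in
  ~ (0 <= (1 - alpha) * (beta ^+ 2 * s + 1 + g ^+ 2 * m)
       + alpha * (beta * s + 1 + g * m) ^+ 2 - 2 * beta * s * (alpha + beta)).
Proof.
move=> a0 a1 b0 b1 s0 m0 h3 hm g H.
have mn : m != 0 by rewrite gt_eqF.
have gm : g * m = - (beta * s + 1) by rewrite /g; field.
have z0 : beta * s + 1 + g * m = 0 by rewrite gm; lra.
rewrite z0 expr0n /= mulr0 addr0 in H.
set Q := g ^+ 2 * m in H.
have Qm : Q * m = (beta * s + 1) ^+ 2 by rewrite /Q /g; field.
have bs : beta * s <= s by rewrite ler_piMl.
have bs0 : 0 <= beta * s by rewrite mulr_ge0 // ltW.
have Q1 : Q <= 1.
  rewrite -(ler_pM2r m0) Qm mul1r; apply: le_trans hm.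
  rewrite ler_sqr ?nnegrE //; try lra.
have Q0 : 0 <= Q by rewrite /Q mulr_ge0 ?sqr_ge0 // ltW.
have h1 : 0 <= alpha * (beta ^+ 2 * s + 1 + Q).
  have hb2 : 0 <= beta ^+ 2 * s by apply: mulr_ge0 => //; exact: sqr_ge0.
  apply: mulr_ge0; [exact: ltW | lra].
have h2 : 0 <= alpha * (beta * s) by apply: mulr_ge0 => //; exact: ltW.
have e : 2 * beta * s * (alpha + beta) = 2 * (alpha * (beta * s)) + 2 * (beta ^+ 2 * s) by ring.
lra.
Qed.

Lemma sum_le_single (R : realType) d (A : seq 'rV[R]_d) x0 c :
  (forall x, x \in A -> dotv x x0 <= c) -> dotv (\sum_(x <- A) x) x0 <= c * (size A)%:R.
Proof.
move=> H; rewrite dotv_suml -sum_cst big_seq_cond [X in _ <= X]big_seq_cond.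
by apply: ler_sum => x /andP[xA _]; apply: H.
Qed.

Lemma sum_eq_single (R : realType) d (B : seq 'rV[R]_d) x0 c :
  (forall y, y \in B -> dotv x0 y = c) -> dotv x0 (\sum_(y <- B) y) = c * (size B)%:R.
Proof.
move=> H; rewrite dotvC dotv_suml -sum_cst big_seq_cond [RHS]big_seq_cond.
by apply: eq_bigr => y /andP[yB _]; rewrite dotvC H.
Qed.

Lemma adjG_sym (R : realType) d (beta : R) (x y : 'rV[R]_d) : adjG beta x y = adjG beta y x.
Proof. by rewrite /adjG eq_sym dotvC. Qed.

Lemma adjG_irr (R : realType) d (beta : R) (x : 'rV[R]_d) : adjG beta x x = false.
Proof. by rewrite /adjG eqxx. Qed.

Lemma dot_adj (R : realType) d (beta : R) (x y : 'rV[R]_d) : adjG beta x y -> dotv x y <= - beta.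
Proof. by case/andP. Qed.

Lemma dot_nonadj (R : realType) d (beta alpha : R) (P : {fset 'rV[R]_d}) x y :
  spherical_code_L beta alpha P -> x \in P -> y \in P -> x != y -> ~~ adjG beta x y ->
  dotv x y = alpha.
Proof.
move=> [_ hP] xP yP xy; case: (hP x y xP yP xy) => [[h1 h2]|//].
by rewrite /adjG xy h1 h2.
Qed.

Lemma dot_le_alpha (R : realType) d (beta alpha : R) (P : {fset 'rV[R]_d}) x y :
  0 < alpha -> 0 < beta ->
  spherical_code_L beta alpha P -> x \in P -> y \in P -> x != y -> dotv x y <= alpha.
Proof.
move=> a0 b0 [_ hP] xP yP xy; case: (hP x y xP yP xy) => [[h1 h2]|->//].
apply: le_trans h2 _; lra.
Qed.

Lemma bad_small (R : realType) d (beta alpha e : R) (P I : {fset 'rV[R]_d}) u :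
  0 < alpha -> alpha < 1 -> 0 < beta -> beta <= 1 -> 0 < e -> e <= 1 ->
  spherical_code_L beta alpha P -> I `<=` P -> independentG beta I ->
  u \in P -> u \notin I ->
  e * (#|` I|)%:R < (#|` I `\` [fset v in I | adjG beta u v]|)%:R ->
  e * beta ^+ 2 * (#|` [fset v in I | adjG beta u v]|)%:R <= 10.
Proof.
move=> a0 a1 b0 b1 e0 e1 hP IP indI uP uI hbad.
set T := [fset v in I | adjG beta u v] in hbad *.
set S := I `\` T in hbad.
have TI : T `<=` I by apply/fsubsetP => v; rewrite inE => /andP[].
have inP : forall v, v \in I -> v \in P by move=> v; apply/fsubsetP.
have hunit : forall x, x \in P -> dotv x x = 1 by case: hP.
have memT : forall v, v \in T -> v \in I /\ adjG beta u v.
  by move=> v; rewrite inE => /andP[].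
have memS : forall v, v \in S -> v \in I /\ ~~ adjG beta u v.
  move=> v; rewrite in_fsetD => /andP[vT vI]; split => //.
  by apply: contra vT => h; rewrite !inE; apply/andP; split.
have neq : forall v, v \in I -> u != v by move=> v vI; apply: contraNneq uI => ->.
set a := e * beta / 4.
set t := (#|` T|)%:R : R; set m := (#|` S|)%:R : R.
set g := - (1 + a * t) / m.
have a0' : 0 <= a by rewrite /a divr_ge0 // mulr_ge0 // ltW.
have m0 : 0 < m by apply: le_lt_trans hbad; rewrite mulr_ge0 // ltW.
have g0 : g <= 0.
  rewrite /g mulNr oppr_le0 divr_ge0 ?ltW //.
  have : 0 <= a * t by rewrite mulr_ge0.
  lra.
have H := @tri_ineq R d u T S alpha beta a g a0' g0.
have := realC a0 a1 b0 b1 e0 e1 (t := t) (m := m).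
apply.
- by rewrite /t.
- by move: m0; rewrite /m ltr0n => h; rewrite ler1n.
- apply: (le_lt_trans _ hbad); apply: ler_wpM2l; [exact: ltW | rewrite /t ler_nat; exact: fsubset_leq_card].
apply: H.
- apply: self_le; first exact: fset_uniq.
    by move=> x /memT [/inP xP _]; apply: hunit.
  move=> x y /memT [/inP xP _] /memT [/inP yP _] xy.
  exact: (dot_le_alpha a0 b0 hP).
- apply: sum_le_single => x /memT [_ h]; rewrite dotvC; apply: dot_adj.
  exact: h.
- apply: cross_eq => x y xT yS.
  have [xI _] := memT x xT; have [yI _] := memS y yS.
  apply: (dot_nonadj hP (inP _ xI) (inP _ yI)); last exact: indI.
  by apply: contraTneq xT => ->; move: yS; rewrite in_fsetD => /andP[].
- exact: hunit.
- apply: sum_eq_single => y /memS [yI h].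
  exact: (dot_nonadj hP uP (inP _ yI) (neq _ yI) h).
- apply: self_le; first exact: fset_uniq.
    by move=> x /memS [/inP xP _]; apply: hunit.
  move=> x y /memS [/inP xP _] /memS [/inP yP _] xy.
  exact: (dot_le_alpha a0 b0 hP).
Qed.

Lemma Wv_small (R : realType) d (beta alpha : R) (P I S : {fset 'rV[R]_d}) v :
  0 < alpha -> alpha < 1 -> 0 < beta -> beta <= 1 ->
  spherical_code_L beta alpha P -> I `<=` P -> independentG beta I -> v \in I ->
  S `<=` P -> (forall u, u \in S -> u \notin I) -> (forall u, u \in S -> adjG beta u v) ->
  3 <= beta ^+ 2 * (#|` S|)%:R ->
  ((#|` S|)%:R + 1) ^+ 2 <=
     ((#|` [fset w in I | all (fun u => ~~ adjG beta u w) S]|)%:R : R) ->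
  False.
Proof.
move=> a0 a1 b0 b1 hP IP indI vI SP SI Sv h3 hm.
set I0 := [fset w in I | all (fun u => ~~ adjG beta u w) S] in hm.
have inP : forall x, x \in I -> x \in P by move=> x; apply/fsubsetP.
have inSP : forall x, x \in S -> x \in P by move=> x; apply/fsubsetP.
have hunit : forall x, x \in P -> dotv x x = 1 by case: hP.
have memI0 : forall w, w \in I0 -> w \in I /\ forall u, u \in S -> ~~ adjG beta u w.
  by move=> w; rewrite inE => /andP[wI /allP h].
have [u0 u0S] : exists u, u \in S.
  apply/fset0Pn; rewrite -cardfs_gt0 -(ltr0n R).
  have : 0 < beta ^+ 2 * (#|` S|)%:R by lra.
  by rewrite pmulr_rgt0 // exprn_gt0.
set s := (#|` S|)%:R : R in h3 hm; set m := (#|` I0|)%:R : R in hm.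
have s0 : 0 <= s by rewrite /s.
have m0 : 0 < m by apply: lt_le_trans hm; have := sqr_ge0 (s + 1); nra.
set g := - (beta * s + 1) / m.
have g0 : g <= 0.
  rewrite /g mulNr oppr_le0 divr_ge0 ?ltW //.
  have : 0 <= beta * s by rewrite mulr_ge0 // ltW.
  lra.
have H := @tri_ineq R d v S I0 alpha beta beta g (ltW b0) g0.
apply: (realW a0 a1 b0 b1 s0 m0 h3 hm).
apply: H.
- apply: self_le; first exact: fset_uniq.
    by move=> x /inSP xP; apply: hunit.
  move=> x y /inSP xP /inSP yP xy.
  exact: (dot_le_alpha a0 b0 hP).
- by apply: sum_le_single => x xS; apply: dot_adj; apply: Sv.
- apply: cross_eq => x y xS yI0.
  have [yI hy] := memI0 y yI0.
  apply: (dot_nonadj hP (inSP _ xS) (inP _ yI)); last exact: hy.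
  by apply: contraNneq (SI x xS) => ->.
- exact: hunit (inP _ vI).
- apply: sum_eq_single => y yI0.
  have [yI hy] := memI0 y yI0.
  apply: (dot_nonadj hP (inP _ vI) (inP _ yI)); last exact: indI.
  by apply: contraNneq (hy u0 u0S) => <-; apply: Sv.
- apply: self_le; first exact: fset_uniq.
    by move=> x /memI0 [/inP xP _]; apply: hunit.
  move=> x y /memI0 [/inP xP _] /memI0 [/inP yP _] xy.
  exact: (dot_le_alpha a0 b0 hP).
Qed.

Lemma clique_small (R : realType) d (beta alpha : R) (P Y : {fset 'rV[R]_d}) :
  0 < beta -> spherical_code_L beta alpha P -> Y `<=` P ->
  (forall x y, x \in Y -> y \in Y -> x != y -> adjG beta x y) ->
  beta * ((#|` Y|)%:R - 1) <= 1.
Proof.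
move=> b0 hP YP cY.
have inP : forall x, x \in Y -> x \in P by move=> x; apply/fsubsetP.
have H : dotv (\sum_(x <- Y) x) (\sum_(y <- Y) y) <=
     (#|` Y|)%:R + (- beta) * (#|` Y|)%:R * ((#|` Y|)%:R - 1).
  apply: self_le; first exact: fset_uniq.
    by move=> x /inP xP; case: hP => h _; apply: h.
  by move=> x y xY yY xy; apply: dot_adj; apply: cY.
have G := dotv_ge0 (\sum_(x <- Y) x).
set p := (#|` Y|)%:R : R in H *.
have p0 : 0 <= p by rewrite /p.
have [->|pn0] := eqVneq p 0; first by rewrite sub0r mulrN1; lra.
have pp : 0 < p by rewrite lt_def pn0 p0.
have : 0 <= p * (1 - beta * (p - 1)) by lra.
rewrite pmulr_rge0 //; lra.
Qed.

Lemma sub_card (K : choiceType) (X : {fset K}) n :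
  (n <= #|` X|)%N -> exists S : {fset K}, S `<=` X /\ #|` S| = n.
Proof.
move=> hn; exists [fset x in take n X]; split.
  by apply/fsubsetP => x; rewrite inE => /mem_take.
rewrite card_fseq undup_id ?take_uniq ?fset_uniq // size_take.
by case: ltnP => // h; apply/eqP; rewrite eqn_leq h hn.
Qed.

Lemma fin_arith (u u' w k s0 n0 : nat) :
  u = (k + u' + w)%N -> (w <= s0 * k)%N -> (u <= u' + (n0 + s0 + 1) * k)%N.
Proof. move=> -> h; nia. Qed.

Lemma sumn_cst (T : Type) (r : seq T) (c : nat) : (\sum_(i <- r) c = c * size r)%N.
Proof. by elim: r => [|a r IH]; rewrite ?big_nil ?muln0 // big_cons IH /= mulnS. Qed.

Unset Implicit Arguments.

Theorem lemma6 (R : realType) (beta delta : R) :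
  0 < beta -> beta <= 1 -> 0 < delta ->
  exists M : R,
    forall (alpha : R) (d : nat) (P U I : {fset 'rV[R]_d}),
      0 < alpha -> alpha < 1 ->
      spherical_code_L beta alpha P ->
      U `<=` P ->
      max_independent_in beta U I ->
      exists U' : {fset 'rV[R]_d},
        U' `<=` U `\` I /\
        (#|` U|%:R - M * #|` I|%:R <= (#|` U'|%:R : R)) /\
        (forall u, u \in U' ->
           (1 - delta) * #|` I|%:R <= (#|` [fset v in I | adjG beta u v]|%:R : R)).
Proof.
move=> b0 b1 d0.
pose e := if delta <= 1 then delta else 1.
have e0 : 0 < e by rewrite /e; case: ifP.
have e1 : e <= 1 by rewrite /e; case: ifP.
have ed : e <= delta.
  rewrite /e; case: ifP => // /negbT; rewrite -ltNge => h; exact: ltW.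
have eb0 : 0 < e * beta ^+ 2 by rewrite mulr_gt0 // exprn_gt0.
pose s0 := (Num.truncn (3 / beta ^+ 2)).+1.
have hs0 : 3 <= beta ^+ 2 * s0%:R.
  have := truncnS_gt (3 / beta ^+ 2); rewrite ltr_pdivrMr ?exprn_gt0 // mulrC => h.
  exact: ltW.
pose C := 10 / (e * beta ^+ 2).
have C0 : 0 <= C by rewrite /C divr_ge0 // ltW.
pose K0 := ((Num.truncn (s0%:R * C)).+1 + (s0.+1) ^ 2)%N.
have hK0 : s0%:R * C + (s0%:R + 1) ^+ 2 <= K0%:R.
  rewrite /K0 !natrD natrX.
  rewrite -[s0.+1]addn1 natrD.
  have := truncnS_gt (s0%:R * C); lra.
pose T0 := (Num.truncn (1 / beta)).+2.
have hT0 : 1 < beta * (T0%:R - 1).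
  have := truncnS_gt (1 / beta); rewrite ltr_pdivrMr // mul1r => h.
  rewrite /T0 -[_.+2]addn1 natrD addrK mulrC.
  by rewrite div1r.
pose N0 := (2 ^ (T0 + K0))%N.
exists (N0 + s0 + 1)%:R.
move=> alpha d P U I a0 a1 hP UP [IU [indI maxI]].
have IP : I `<=` P := fsubset_trans IU UP.
have [small | big] := ltnP #|` I| K0.
  exists fset0; split; first exact: fsub0set.
  split; last by move=> u; rewrite in_fset0.
  have hU : (#|` U| < N0)%N.
    rewrite ltnNge; apply/negP => hN.
    have := @ramsey _ (adjG beta) (@adjG_sym R d beta) (@adjG_irr R d beta)
               (T0 + K0) T0 K0 U (leqnn _) hN.
    case => [[Y [YU [pY cY]]] | [Y [YU [qY iY]]]].
      have h1 := clique_small b0 hP (fsubset_trans YU UP) cY.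
      have h2 : (T0%:R : R) <= #|` Y|%:R by rewrite ler_nat.
      have h3 : beta * (T0%:R - 1) <= beta * (#|` Y|%:R - 1).
        by apply: ler_wpM2l; [exact: ltW | move: h2; clear; lra].
      move: h1 h3 hT0; clear; lra.
    by have := maxI Y YU iY => h; move: (leq_trans qY h); rewrite leqNgt small.
  have [k0|kpos] := posnP #|` I|.
    have U0 : #|` U| = 0%N.
      apply/eqP; rewrite cardfs_eq0; apply: contraT => /fset0Pn [x xU].
      have := maxI [fset x]; rewrite cardfs1 k0.
      apply => //; first by apply/fsubsetP => y; rewrite inE => /eqP ->.
      by move=> y z; rewrite !inE => /eqP -> /eqP ->; rewrite adjG_irr.
    by rewrite U0 k0 mulr0 subr0.
  rewrite cardfs0 subr_le0.
  apply: le_trans (_ : (N0 + s0 + 1)%:R * 1 <= _); last first.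
    by rewrite ler_wpM2l // ler1n.
  by rewrite mulr1 ler_nat; apply: leq_trans (ltnW hU) _; rewrite -addnA leq_addr.
set k := #|` I| in big *.
pose Tu u := [fset v in I | adjG beta u v].
set U' := [fset u in U `\` I | (1 - delta) * k%:R <= (#|` Tu u|%:R : R)].
exists U'.
have U'sub : U' `<=` U `\` I by apply/fsubsetP => u; rewrite /U' /Tu !inE => /andP[h _]; exact: h.
split => //; split; last by move=> u; rewrite /U' /Tu !inE => /andP[_ h]; exact: h.
set W := (U `\` I) `\` U'.
have W_bad : forall u, u \in W ->
    [/\ u \in U, u \notin I & (#|` Tu u|%:R : R) < (1 - delta) * k%:R].
  move=> u; rewrite !in_fsetD => /andP[uU' /andP[uI uU]]; split => //.
  move: uU'; rewrite /U' /Tu !inE uU uI /= => h; rewrite ltNge; exact: h.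
have TuI : forall u, Tu u `<=` I by move=> u; apply/fsubsetP => v; rewrite inE => /andP[].
have Tu_small : forall u, u \in W -> (#|` Tu u|%:R : R) <= C.
  move=> u /W_bad [uU uI hb].
  rewrite /C ler_pdivlMr // mulrC.
  apply: (bad_small a0 a1 b0 b1 e0 e1 hP IP indI (fsubsetP UP _ uU) uI).
  rewrite (cardfsDS (TuI u)) natrB; last exact: fsubset_leq_card (TuI u).
  rewrite -/k.
  have := ler_wpM2r (ler0n R k) ed.
  move: hb; clear; lra.
have hexists : forall u, u \in W -> exists2 v, v \in I & adjG beta u v.
  move=> u uW; have [uU uI _] := W_bad u uW.
  apply/hasP; apply: contraT => hn.
  have Jsub : u |` I `<=` U.
    by apply/fsubsetP => x; rewrite !inE => /orP[/eqP -> //|]; apply/fsubsetP.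
  have nadj : forall v, v \in I -> ~~ adjG beta u v.
    by move=> v vI; apply: contra hn => h; apply/hasP; exists v.
  have Jind : independentG beta (u |` I).
    move=> x y; rewrite !inE => /orP[/eqP -> | xI] /orP[/eqP -> | yI].
    - by rewrite adjG_irr.
    - exact: nadj.
    - by rewrite adjG_sym; apply: nadj.
    - exact: indI.
  by have := maxI _ Jsub Jind; rewrite cardfsU1 uI /= add1n ltnn.
pose Wv v := [fset u in W | adjG beta u v].
have Wv_le : forall v, v \in I -> (#|` Wv v| <= s0)%N.
  move=> v vI; rewrite leqNgt; apply/negP => hlt.
  have [S [SW cS]] := sub_card (ltnW hlt).
  have SW' : forall u, u \in S -> u \in W /\ adjG beta u v.
    by move=> u /(fsubsetP SW); rewrite /Wv inE => /andP[].
  apply: (Wv_small a0 a1 b0 b1 hP IP indI vI (S := S)).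
  - apply/fsubsetP => u /SW' [/W_bad [uU _ _] _]; exact: (fsubsetP UP).
  - by move=> u /SW' [/W_bad [_ uI _] _].
  - by move=> u /SW' [].
  - by rewrite cS.
  set I0 := [fset w in I | all (fun u => ~~ adjG beta u w) S].
  have sub0 : I `\` I0 `<=` \big[fsetU/fset0]_(u <- S) Tu u.
    apply/fsubsetP => w; rewrite in_fsetD => /andP[wI0 wI].
    have : ~~ all (fun u => ~~ adjG beta u w) S.
      by move: wI0; rewrite /I0 !inE /=; apply: contra => h; apply/andP; split.
    rewrite -has_predC => /hasP [u uS /negPn h].
    apply/bigfcupP; exists u; first by rewrite uS.
    by rewrite /Tu !inE /=; apply/andP; split.
  have c1 : (k <= #|` I0| + \sum_(u <- S) #|` Tu u|)%N.
    rewrite /k -(cardfsID I0 I); apply: leq_add.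
      exact: fsubset_leq_card (fsubsetIr I I0).
    exact: leq_trans (fsubset_leq_card sub0) (card_bigU S Tu).
  have c2 : (\sum_(u <- S) #|` Tu u|)%:R <= C * s0%:R :> R.
    rewrite natr_sum -cS -sum_cst big_seq_cond [X in _ <= X]big_seq_cond.
    by apply: ler_sum => u /andP[/SW' [uW _] _]; apply: Tu_small.
  rewrite cS.
  have : (k%:R : R) <= #|` I0|%:R + (\sum_(u <- S) #|` Tu u|)%:R by rewrite -natrD ler_nat.
  have : (K0%:R : R) <= k%:R by rewrite ler_nat.
  lra.
have cardW : (#|` W| <= s0 * k)%N.
  have subW : W `<=` \big[fsetU/fset0]_(v <- I) Wv v.
    apply/fsubsetP => u uW; have [v vI h] := hexists u uW.
    apply/bigfcupP; exists v; first by rewrite vI.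
    by move: uW; rewrite /Wv /W !inE /= h andbT.
  apply: leq_trans (fsubset_leq_card subW) _.
  apply: leq_trans (card_bigU _ _) _.
  rewrite /k -sumn_cst big_seq_cond [X in (_ <= X)%N]big_seq_cond.
  by apply: leq_sum => v /andP[vI _]; apply: Wv_le.
have cU : #|` U| = (k + #|` U'| + #|` W|)%N.
  have h1 := cardfsDS IU; have h2 := cardfsDS U'sub.
  have h3 := fsubset_leq_card IU; have h4 := fsubset_leq_card U'sub.
  rewrite /W h2 h1; rewrite h1 in h4; rewrite /k -addnA subnKC // subnKC //.
rewrite lerBlDr -natrM -natrD ler_nat; exact: fin_arith cU cardW.
Qed.
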